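(* Consider the following interactive optimization problem with a single unknown knapsack constraint. Given $n$, a known objective vector $\boldsymbol{v} \in \mathbb{R}^n$ and a known set $X \subseteq \{0,1\}^n$, one wants to solve $$\max\ \boldsymbol{v}\cdot\boldsymbol{x} \quad \text{s.t.}\quad \bar{\boldsymbol{w}}\cdot \boldsymbol{x} \le 1,\ \ \boldsymbol{x}\in X,$$ where the weight vector $\bar{\boldsymbol{w}} \in [0,1]^n$ is unknown to the algorithm; the only access to $\bar{\boldsymbol{w}}$ is through a membership oracle which, given $\boldsymbol{\chi}\in X$, answers (with certainty) whether $\bar{\boldsymbol{w}}\cdot\boldsymbol{\chi}\le 1$. Calling the oracle on a point is called labeling that point. Then for any deterministic algorithm for this problem and any $\epsilon\in(0,1)$, there exists an instance of the problem (as a function of $n$) on which the algorithm takes $\Omega(n^{1/\epsilon})$ oracle calls to label a feasible solution whose objective value is within a multiplicative factor of $(1-\epsilon)$ with respect to the optimal value.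
   Context: The algorithm knows $\boldsymbol{v}$ and $X$ but not $\bar{\boldsymbol{w}}$; a deterministic algorithm chooses each point to label as a function only of the previously obtained labels. The asymptotic bound is in $n$ with $\epsilon$ fixed. *)

(* Defs.v *)
From HB Require Import structures.
From mathcomp Require Import all_boot all_order all_algebra.
From mathcomp Require Import all_classical all_reals all_analysis.
Set Implicit Arguments. Unset Strict Implicit. Unset Printing Implicit Defensive.
Import Order.TTheory GRing.Theory Num.Theory.
Local Open Scope ring_scope.

Notation bpoint n := {ffun 'I_n -> bool}.

Definition dotb (R : realType) (n : nat) (u : 'I_n -> R) (x : bpoint n) : R :=
  \sum_(i < n) u i * (x i)%:R.

(* The constraint  w . x <= 1 ; this is exactly the oracle's answer. *)
Definition feasible (R : realType) (n : nat) (w : 'I_n -> R) (x : bpoint n) : bool :=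
  dotb w x <= 1.

(* A deterministic algorithm: knows n, v and X, and chooses the next point to
   label as a function of the labels obtained so far (in order). *)
Definition algorithm (R : realType) :=
  forall n : nat, ('I_n -> R) -> {set bpoint n} -> seq bool -> bpoint n.

Definition valid_alg (R : realType) (A : algorithm R) : Prop :=
  forall n (v : 'I_n -> R) (X : {set bpoint n}) (h : seq bool),
    X != finset.set0 -> A n v X h \in X.

Fixpoint history (R : realType) (A : algorithm R) n (v : 'I_n -> R)
    (X : {set bpoint n}) (w : 'I_n -> R) (k : nat) : seq bool :=
  match k with
  | 0 => [::]
  | k'.+1 => let h := history A v X w k' in
             rcons h (feasible w (A n v X h))
  end.

(* The point labelled in the (k+1)-th oracle call (k = 0, 1, ...). *)
Definition query (R : realType) (A : algorithm R) n (v : 'I_n -> R)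
    (X : {set bpoint n}) (w : 'I_n -> R) (k : nat) : bpoint n :=
  A n v X (history A v X w k).

Definition good_sol (R : realType) n (v : 'I_n -> R) (X : {set bpoint n})
    (w : 'I_n -> R) (eps : R) (x : bpoint n) : Prop :=
  [/\ x \in X, feasible w x &
      forall y, y \in X -> feasible w y -> (1 - eps) * dotb v y <= dotb v x].

(* Main.v *)
Require Import Defs.
From HB Require Import structures.
From mathcomp Require Import all_boot all_order all_algebra.
From mathcomp Require Import all_classical all_reals all_analysis.
From mathcomp Require Import zify.
Import Order.TTheory GRing.Theory Num.Theory.
Local Open Scope ring_scope.

Lemma nseq_rcons_false k : rcons (nseq k false) false = nseq k.+1 false.
Proof. by elim: k => [|k IH] //=; rewrite IH. Qed.

Lemma ffact_lb n m : ((n - m) ^ m <= n ^_ m)%N.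
Proof.
elim: m n => [|m IH] n; first by rewrite ffactn0 expn0.
rewrite ffactnS expnS; apply: leq_mul; first exact: leq_subr.
have -> : (n - m.+1 = n.-1 - m)%N by lia.
exact: IH.
Qed.

Lemma expn_mono a b e : (a <= b)%N -> (a ^ e <= b ^ e)%N.
Proof. by move=> h; elim: e => [|e IH] //; rewrite !expnS leq_mul. Qed.

Lemma nat_bound n m : (2 * m <= n)%N -> (n ^ m <= 2 ^ m * m`! * 'C(n, m))%N.
Proof.
move=> hn.
have h1 : (n ^ m <= (2 * (n - m)) ^ m)%N.
  by apply: expn_mono; lia.
apply: (leq_trans h1); rewrite expnMn -mulnA leq_mul2l; apply/orP; right.
by rewrite mulnC bin_ffact ffact_lb.
Qed.

Section Inst.
Variables (R : realType) (n m : nat).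

Definition pt (B : {set 'I_n}) : bpoint n := [ffun i => i \in B].

Lemma pt_inj : injective pt.
Proof.
move=> A B h; apply/setP => i.
by have := congr1 (fun f : bpoint n => f i) h; rewrite /pt !ffunE.
Qed.

Lemma dot_pt (u : 'I_n -> R) B : dotb u (pt B) = \sum_(i in B) u i.
Proof.
rewrite /dotb [RHS]big_mkcond; apply: eq_bigr => i _.
by rewrite /pt ffunE; case: (i \in B); rewrite ?mulr1 ?mulr0.
Qed.

Definition wA (A0 : {set 'I_n}) (i : 'I_n) : R :=
  if i \in A0 then (m%:R)^-1 else 1.

Lemma wA_gt0 (A0 : {set 'I_n}) i : (0 < m)%N -> 0 < wA A0 i.
Proof.
move=> hm; rewrite /wA; case: (i \in A0) => //.
by rewrite invr_gt0 ltr0n.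
Qed.

Lemma feas_pt (A0 B : {set 'I_n}) : (1 < m)%N -> #|A0| = m -> #|B| = m ->
  feasible (wA A0) (pt B) = (B == A0).
Proof.
move=> hm hA hB; rewrite /feasible dot_pt.
have [->|neq] := eqVneq B A0.
  rewrite (eq_bigr (fun=> (m%:R)^-1 : R)); last by move=> i iA; rewrite /wA iA.
  have hm0 : (m%:R : R) != 0 by rewrite pnatr_eq0; lia.
  by rewrite sumr_const hA -[X in X *+ _]mulr1 -mulrnAr mulVf ?lexx.
apply/negbTE; rewrite -ltNge.
have : ~~ (B \subset A0).
  apply: contra neq => sub; rewrite eqEcard sub hA hB leqnn //.
case/subsetPn => j jB jA.
rewrite (bigD1 j) //= {1}/wA (negbTE jA).
rewrite ltrDl.
have : (0 < #|B :\ j|)%N by rewrite (cardsD1 j B) jB in hB; lia.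
rewrite card_gt0 => /set0Pn [k]; rewrite !inE => /andP [kj kB].
rewrite (bigD1 k) /=; last by rewrite kB kj.
apply: ltr_wpDr; last exact: wA_gt0 (ltnW hm).
by apply: sumr_ge0 => i _; apply/ltW/wA_gt0/(ltnW hm).
Qed.

End Inst.

Arguments pt {n}.
Arguments pt_inj {n}.
Arguments dot_pt {R n}.
Arguments wA {R n} m.
Arguments wA_gt0 {R n m}.
Arguments feas_pt {R n m}.

Theorem theorem1 (R : realType) (A : algorithm R) (hA : valid_alg A)
    (eps : R) (heps : 0 < eps < 1) :
  exists c : R, 0 < c /\
  exists N : nat, forall n : nat, (N <= n)%N ->
    exists (v : 'I_n -> R) (X : {set bpoint n}) (w : 'I_n -> R),
      [/\ forall i, 0 <= v i,
          forall i, 0 <= w i <= 1,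
          exists x, x \in X /\ feasible w x &
          forall k : nat, (k.+1)%:R < c * (n%:R `^ eps^-1) ->
            ~ good_sol v X w eps (query A v X w k)].
Proof.
set m := (Num.Def.trunc eps^-1).+2.
have hm : (1 < m)%N by [].
have hme : eps^-1 <= m%:R.
  apply: ltW; apply: lt_le_trans (truncnS_gt _) _.
  by rewrite ler_nat /m.
set c : R := (((2 ^ m * m`!)%N)%:R)^-1.
have hc : 0 < c by rewrite /c invr_gt0 ltr0n muln_gt0 expn_gt0 fact_gt0.
exists c; split => //.
exists (2 * m)%N => n hn.
pose X : {set bpoint n} := [set pt B | B in [set B : {set 'I_n} | #|B| == m]].
have cardX : #|X| = 'C(n, m).
  rewrite card_in_imset; last by move=> ? ? _ _; apply: pt_inj.
  by rewrite card_draws card_ord.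
have X0 : (0 < #|X|)%N by rewrite cardX bin_gt0; lia.
have Xn0 : X != finset.set0 by rewrite -card_gt0.
pose v : 'I_n -> R := fun=> 1.
pose q j := A n v X (nseq j false).
pose K := (#|X| - 1)%N.
pose Q : {set bpoint n} := [set q (nat_of_ord j) | j : 'I_K].
have cQ : (#|Q| <= K)%N.
  by rewrite /Q (leq_trans (leq_imset_card _ _)) // card_ord.
have : ~~ (X \subset Q).
  apply/negP => sub; have := subset_leq_card sub; lia.
case/subsetPn => x xX xQ.
case/imsetP: (xX) => A0; rewrite inE => /eqP hA0 hx.
have qX j : q j \in X by apply: hA.
have qpt j : exists2 B : {set 'I_n}, #|B| = m & q j = pt B.
  by case/imsetP: (qX j) => B; rewrite inE => /eqP hB ->; exists B.
have qinf j : (j < K)%N -> feasible (wA m A0) (q j) = false.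
  move=> hj; case: (qpt j) => B hB qB; rewrite qB feas_pt //.
  apply: (contraNF _ xQ) => /eqP BA.
  rewrite hx -BA -qB; apply/imsetP; exists (Ordinal hj) => //.
have hist k : (k <= K)%N -> history A v X (wA m A0) k = nseq k false.
  elim: k => [|k IH] hk //=.
  rewrite IH ?(ltnW hk) //.
  change (A n v X (nseq k false)) with (q k).
  by rewrite qinf // nseq_rcons_false.
exists v, X, (wA m A0); split.
- by move=> i; rewrite /v ler01.
- move=> i; apply/andP; split; first exact/ltW/(wA_gt0 A0 i).
  rewrite /wA; case: (i \in A0) => //.
  by rewrite invf_le1 ?ltr0n // ler1n.
- exists x; split => //.
  by rewrite hx feas_pt // eqxx.
- move=> k hk [_ hf _].
  have n1 : (1 <= n%:R :> R) by rewrite ler1n; lia.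
  have hb : c * n%:R `^ eps^-1 <= ('C(n, m))%:R.
    apply: (le_trans (y := c * n%:R ^+ m)).
      by rewrite ler_pM2l // -powR_mulrn ?ler0n //; apply: ler_powR.
    apply: (le_trans (y := c * (((2 ^ m * m`!)%N)%:R * ('C(n, m))%:R))).
      by rewrite ler_pM2l // -natrX -natrM ler_nat nat_bound.
    by rewrite /c mulKf // pnatr_eq0 -lt0n muln_gt0 expn_gt0 fact_gt0.
  have hkK : (k < K)%N.
    suff : (k.+1 < #|X|)%N by rewrite /K; lia.
    by rewrite cardX -(ltr_nat R); apply: (lt_le_trans hk).
  move: hf; rewrite /query hist ?(ltnW hkK) //.
  change (A n v X (nseq k false)) with (q k).
  by rewrite qinf.
Qed.
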